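(* Let $X$ be a proper real random variable with $\mathrm{supp}(X)=\mathbb R$ and a bounded unimodal density $f_X$. Each of the following conditions implies that $X$ has a regular tail: (i) $f_X(x)=O(|x|^{-a})$ and $f_X(x)=\Omega(|x|^{-b})$ as $|x|\to\infty$, for some $b\ge a>1$; (ii) $f_X(x)=O(e^{-b|x|^a})$ and $f_X(x)=\Omega(e^{-b|x|^a})$ as $|x|\to\infty$, for some $a\ge 1$, $b>0$.
   Context: A proper (absolutely continuous) real random variable $X$ with density $f_X$ and c.d.f. $F_X$ is said to have a regular tail if there exist $\gamma\in(0,\tfrac12]$ and positive constants $c_0,c_1,\alpha_0,\alpha_1$ such that $c_0 f_X^{\alpha_0}(x)\le \min(F_X(x),1-F_X(x))\le c_1 f_X^{\alpha_1}(x)$ for every $x\in\mathrm{supp}(X)$ satisfying $\min(F_X(x),1-F_X(x))\le\gamma$. *)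

(* Defs.v *)
From Stdlib Require Import Reals Lra.
Open Scope R_scope.

(* Real power x^a for x >= 0, with the convention 0^a = 0 (a > 0). *)
Definition rpow (x a : R) : R := if Rle_dec x 0 then 0 else Rpower x a.

Definition is_cdf_with_density (F f : R -> R) : Prop :=
  (forall x, 0 <= f x) /\
  (forall a b, a <= b ->
     exists pr : Riemann_integrable f a b, F b - F a = RiemannInt pr) /\
  (forall eps, 0 < eps -> exists N, forall x, x <= N -> Rabs (F x) < eps) /\
  (forall eps, 0 < eps -> exists N, forall x, N <= x -> Rabs (F x - 1) < eps).

(* supp(X) = R : every nonempty open interval has positive probability. *)
Definition full_support (F : R -> R) : Prop :=
  forall a b, a < b -> F a < F b.

Definition unimodal (f : R -> R) : Prop :=
  exists m, (forall x y, x <= y <= m -> f x <= f y) /\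
            (forall x y, m <= x <= y -> f y <= f x).

Definition bounded_fun (f : R -> R) : Prop :=
  exists M, forall x, f x <= M.

(* Regular tail (the support is all of R here, so x ranges over R). *)
Definition regular_tail (F f : R -> R) : Prop :=
  exists gamma c0 c1 al0 al1,
    0 < gamma <= 1/2 /\ 0 < c0 /\ 0 < c1 /\ 0 < al0 /\ 0 < al1 /\
    forall x, Rmin (F x) (1 - F x) <= gamma ->
      c0 * rpow (f x) al0 <= Rmin (F x) (1 - F x) /\
      Rmin (F x) (1 - F x) <= c1 * rpow (f x) al1.

Definition bigO_inf (g h : R -> R) : Prop :=
  exists C R0, 0 < C /\ forall x, R0 <= Rabs x -> g x <= C * h x.

Definition bigOmega_inf (g h : R -> R) : Prop :=
  exists c R0, 0 < c /\ forall x, R0 <= Rabs x -> c * h x <= g x.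

(* Main.v *)
Require Import Defs.
From Stdlib Require Import Reals Lra.
Open Scope R_scope.

Lemma exp_le x y : x <= y -> exp x <= exp y.
Proof. intros [H|H]. left; apply exp_increasing; auto. subst; lra. Qed.

Lemma ln_le x y : 0 < x -> x <= y -> ln x <= ln y.
Proof. intros H [H1|H1]. left; apply ln_increasing; auto. subst; lra. Qed.

Lemma exp_INR_mul (n : nat) x : exp (INR n * x) = exp x ^ n.
Proof.
  induction n as [|n IH]. simpl. rewrite Rmult_0_l, exp_0; reflexivity.
  rewrite S_INR, Rmult_plus_distr_r, Rmult_1_l, exp_plus, IH. simpl. ring.
Qed.

Lemma pow2_exp (n : nat) : 2 ^ n = exp (INR n * ln 2).
Proof. rewrite exp_INR_mul, exp_ln; lra. Qed.

Lemma INR_le_pow2 (n : nat) : INR n + 1 <= 2 ^ n.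
Proof.
  induction n as [|n IH]. simpl. lra. rewrite S_INR. simpl. pose proof (pos_INR n). lra.
Qed.

Lemma int_upper (f : R -> R) (a b M : R) (pr : Riemann_integrable f a b) :
  a <= b -> (forall t, a < t < b -> f t <= M) -> RiemannInt pr <= M * (b - a).
Proof.
  intros Hab H.
  rewrite <- (RiemannInt_P15 (RiemannInt_P14 a b M)).
  apply RiemannInt_P19; auto.
Qed.

Lemma int_lower (f : R -> R) (a b M : R) (pr : Riemann_integrable f a b) :
  a <= b -> (forall t, a < t < b -> M <= f t) -> M * (b - a) <= RiemannInt pr.
Proof.
  intros Hab H.
  rewrite <- (RiemannInt_P15 (RiemannInt_P14 a b M)).
  apply RiemannInt_P19; auto.
Qed.

Lemma tail_geom (T h : R -> R) (R1 s A r : R) :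
  0 <= A -> 0 <= r < 1 -> R1 <= s -> 0 < s ->
  (forall u v, R1 <= u <= v -> T u - T v <= (v - u) * h u) ->
  (forall eps, 0 < eps -> exists N, forall t, N <= t -> T t < eps) ->
  (forall k : nat, 2 ^ k * s * h (2 ^ k * s) <= A * r ^ k) ->
  T s <= A / (1 - r).
Proof.
  intros HA Hr HR1 Hs Hdec Hlim Hk.
  assert (P : forall n : nat, T s <= A * (1 - r ^ n) / (1 - r) + T (2 ^ n * s)).
  { induction n as [|n IH].
    - simpl. replace (A * (1 - 1) / (1 - r)) with 0 by (field; lra).
      rewrite Rmult_1_l. lra.
    - assert (H2 : 1 <= 2 ^ n) by (pose proof (INR_le_pow2 n); pose proof (pos_INR n); lra).
      assert (Hd := Hdec (2 ^ n * s) (2 ^ S n * s)).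
      simpl in Hd |- *.
      assert (Hd' : T (2 ^ n * s) - T (2 * 2 ^ n * s) <= (2 * 2 ^ n * s - 2 ^ n * s) * h (2 ^ n * s)).
      { apply Hd. split; nra. }
      replace (2 * 2 ^ n * s - 2 ^ n * s) with (2 ^ n * s) in Hd' by ring.
      specialize (Hk n).
      replace (A * (1 - r * r ^ n) / (1 - r)) with (A * (1 - r ^ n) / (1 - r) + A * r ^ n) by (field; lra).
      lra. }
  destruct (Rle_or_lt (T s) (A / (1 - r))) as [H|H]; auto.
  exfalso.
  destruct (Hlim (T s - A / (1 - r))) as [N HN]; [lra|].
  destruct (Pow_x_infinity 2 ltac:(rewrite Rabs_pos_eq; lra) (N / s)) as [n Hn].
  specialize (Hn n (le_n n)). rewrite Rabs_pos_eq in Hn by (apply pow_le; lra).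
  assert (HT := HN (2 ^ n * s)).
  assert (N <= 2 ^ n * s).
  { apply Rge_le in Hn.
    replace N with (N / s * s) by (field; lra). nra. }
  specialize (HT H0). specialize (P n).
  assert (0 <= r ^ n) by (apply pow_le; lra).
  assert (A * (1 - r ^ n) / (1 - r) <= A / (1 - r)).
  { unfold Rdiv. apply Rmult_le_compat_r. left; apply Rinv_0_lt_compat; lra. nra. }
  lra.
Qed.

Lemma rpow_pos x al : 0 < x -> rpow x al = exp (al * ln x).
Proof. intros H. unfold rpow. destruct (Rle_dec x 0); [lra|reflexivity]. Qed.

Lemma ln2_pos : 0 < ln 2.
Proof. rewrite <- ln_1. apply ln_increasing; lra. Qed.

Lemma ln_mul_exp c y : 0 < c -> ln (c * exp y) = ln c + y.
Proof. intros H. rewrite ln_mult, ln_exp; auto. apply exp_pos. Qed.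

Lemma side_i a b C c : 1 < a -> a <= b -> 0 < C -> 0 < c ->
 exists c0 c1 al0 al1, 0 < c0 /\ 0 < c1 /\ 0 < al0 /\ 0 < al1 /\
 forall (T h : R -> R) R1, 1 <= R1 ->
  (forall u, R1 <= u -> h u <= C * exp (- a * ln u) /\ c * exp (- b * ln u) <= h u) ->
  (forall u v, R1 <= u <= v -> T u - T v <= (v - u) * h u) ->
  (forall eps, 0 < eps -> exists N, forall t, N <= t -> T t < eps) ->
  (forall u, R1 <= u -> h (u + 1) <= T u) ->
  forall s, R1 <= s -> c0 * rpow (h s) al0 <= T s /\ T s <= c1 * rpow (h s) al1.
Proof.
  intros Ha Hab HC Hc.
  pose proof ln2_pos as Hl2.
  set (r := exp ((1 - a) * ln 2)).
  assert (Hr : 0 <= r < 1).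
  { unfold r; split. left; apply exp_pos. apply Rlt_le_trans with (exp 0); [apply exp_increasing; nra | rewrite exp_0; lra]. }
  set (K := C / (1 - r)).
  assert (HK : 0 < K) by (unfold K; apply Rdiv_lt_0_compat; lra).
  set (al1 := (a - 1) / b). set (al0 := b / a).
  exists (c * exp (- b * ln 2) * exp (- al0 * ln C)), (K * exp (- al1 * ln c)), al0, al1.
  assert (0 < al1) by (unfold al1; apply Rdiv_lt_0_compat; lra).
  assert (0 < al0) by (unfold al0; apply Rdiv_lt_0_compat; lra).
  split. { pose proof (exp_pos (- b * ln 2)); pose proof (exp_pos (- al0 * ln C)).
           apply Rmult_lt_0_compat; auto. apply Rmult_lt_0_compat; auto. }
  split. { pose proof (exp_pos (- al1 * ln c)). apply Rmult_lt_0_compat; auto. }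
  split; auto. split; auto.
  intros T h R1 HR1 Hh Hdec Hlim Hlow s Hs.
  assert (Hs0 : 0 < s) by lra.
  destruct (Hh s Hs) as [HhU HhL].
  assert (Hhs : 0 < h s) by (pose proof (exp_pos (- b * ln s)); nra).
  rewrite !rpow_pos by auto.
  split.
  -
    assert (H1 : c * exp (- b * (ln 2 + ln s)) <= T s).
    { apply Rle_trans with (h (s + 1)); [|apply Hlow; auto].
      destruct (Hh (s + 1) ltac:(lra)) as [_ H2].
      apply Rle_trans with (2 := H2). apply Rmult_le_compat_l; [lra|].
      apply exp_le.
      assert (ln (s + 1) <= ln 2 + ln s).
      { rewrite <- ln_mult by lra. apply ln_le; lra. }
      nra. }
    apply Rle_trans with (2 := H1).
    assert (H2 : ln (h s) <= ln C + - a * ln s).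
    { rewrite <- ln_mul_exp by auto. apply ln_le; auto. }
    assert (H3 : exp (al0 * ln (h s)) <= exp (al0 * (ln C + - a * ln s))).
    { apply exp_le. apply Rmult_le_compat_l; lra. }
    assert (E : c * exp (- b * ln 2) * exp (- al0 * ln C) * exp (al0 * (ln C + - a * ln s))
               = c * exp (- b * (ln 2 + ln s))).
    { rewrite !Rmult_assoc. rewrite <- !exp_plus. f_equal. f_equal.
      unfold al0. field. lra. }
    rewrite <- E.
    apply Rmult_le_compat_l; auto.
    pose proof (exp_pos (- b * ln 2)); pose proof (exp_pos (- al0 * ln C)).
    left. apply Rmult_lt_0_compat; auto. apply Rmult_lt_0_compat; auto.
  -
    assert (H1 : T s <= C * exp ((1 - a) * ln s) / (1 - r)).
    { apply (tail_geom T h R1 s); auto.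
      - left; apply Rmult_lt_0_compat; auto; apply exp_pos.
      - intros k.
        assert (Hk1 : 1 <= 2 ^ k) by (pose proof (INR_le_pow2 k); pose proof (pos_INR k); lra).
        set (u := 2 ^ k * s).
        assert (Hu : s <= u) by (unfold u; nra).
        destruct (Hh u ltac:(lra)) as [HU _].
        apply Rle_trans with (u * (C * exp (- a * ln u))).
        { apply Rmult_le_compat_l; lra. }
        assert (Elu : ln u = INR k * ln 2 + ln s).
        { unfold u. rewrite ln_mult, pow2_exp, ln_exp; lra. }
        right.
        unfold r. rewrite <- exp_INR_mul.
        replace u with (exp (ln u)) at 1 by (apply exp_ln; lra).
        rewrite Elu.
        replace (exp (INR k * ln 2 + ln s) * (C * exp (- a * (INR k * ln 2 + ln s))))
          with (C * (exp (INR k * ln 2 + ln s) * exp (- a * (INR k * ln 2 + ln s)))) by ring.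
        rewrite Rmult_assoc. f_equal. rewrite <- !exp_plus. f_equal. ring. }
    apply Rle_trans with (1 := H1).
    assert (H2 : ln c + - b * ln s <= ln (h s)).
    { rewrite <- ln_mul_exp by auto. apply ln_le; auto.
      apply Rmult_lt_0_compat; auto; apply exp_pos. }
    assert (H3 : exp (al1 * (ln c + - b * ln s)) <= exp (al1 * ln (h s))).
    { apply exp_le. apply Rmult_le_compat_l; lra. }
    assert (E : K * exp (- al1 * ln c) * exp (al1 * (ln c + - b * ln s))
               = C * exp ((1 - a) * ln s) / (1 - r)).
    { assert (E2 : exp (- al1 * ln c) * exp (al1 * (ln c + - b * ln s)) = exp ((1 - a) * ln s)).
      { rewrite <- exp_plus. f_equal. unfold al1. field. lra. }
      rewrite Rmult_assoc, E2. unfold K. field. lra. }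
    rewrite <- E.
    apply Rmult_le_compat_l; auto.
    left. apply Rmult_lt_0_compat; auto; apply exp_pos.
Qed.

Lemma side_ii a b C c : 1 <= a -> 0 < b -> 0 < C -> 0 < c ->
 exists c0 c1 al0 al1, 0 < c0 /\ 0 < c1 /\ 0 < al0 /\ 0 < al1 /\
 forall (T h : R -> R) R1, 1 <= R1 -> 2 * ln 2 <= b * R1 ->
  (forall u, R1 <= u -> h u <= C * exp (- b * Rpower u a) /\ c * exp (- b * Rpower u a) <= h u) ->
  (forall u v, R1 <= u <= v -> T u - T v <= (v - u) * h u) ->
  (forall eps, 0 < eps -> exists N, forall t, N <= t -> T t < eps) ->
  (forall u, R1 <= u -> h (u + 1) <= T u) ->
  forall s, R1 <= s -> c0 * rpow (h s) al0 <= T s /\ T s <= c1 * rpow (h s) al1.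
Proof.
  intros Ha Hb HC Hc.
  pose proof ln2_pos as Hl2.
  set (r := exp (- ln 2)).
  assert (Hr : 0 <= r < 1).
  { unfold r; split. left; apply exp_pos.
    apply Rlt_le_trans with (exp 0); [apply exp_increasing; lra | rewrite exp_0; lra]. }
  set (K := C / (1 - r)).
  assert (HK : 0 < K) by (unfold K; apply Rdiv_lt_0_compat; lra).
  set (e2 := exp (a * ln 2)).
  assert (He2 : 0 < e2) by apply exp_pos.
  exists (c * exp (- e2 * ln C)), (K * (2 / b) * exp (- (1/2) * ln c)), e2, (1/2).
  split. { pose proof (exp_pos (- e2 * ln C)). apply Rmult_lt_0_compat; auto. }
  split. { pose proof (exp_pos (- (1/2) * ln c)). apply Rmult_lt_0_compat; auto.
           apply Rmult_lt_0_compat; auto. apply Rdiv_lt_0_compat; lra. }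
  split; auto. split; [lra|].
  intros T h R1 HR1 HbR Hh Hdec Hlim Hlow s Hs.
  assert (Hs0 : 0 < s) by lra.
  assert (Pge : forall u, 1 <= u -> u <= Rpower u a).
  { intros u Hu. unfold Rpower. rewrite <- (exp_ln u) at 1 by lra. apply exp_le.
    assert (0 <= ln u) by (rewrite <- ln_1; apply ln_le; lra). nra. }
  destruct (Hh s Hs) as [HhU HhL].
  set (Ps := Rpower s a) in *.
  assert (HPs : s <= Ps) by (apply Pge; lra).
  assert (Hhs : 0 < h s) by (pose proof (exp_pos (- b * Ps)); nra).
  rewrite !rpow_pos by auto.
  split.
  -
    assert (H1 : c * exp (- b * (e2 * Ps)) <= T s).
    { apply Rle_trans with (h (s + 1)); [|apply Hlow; auto].
      destruct (Hh (s + 1) ltac:(lra)) as [_ H2].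
      apply Rle_trans with (2 := H2). apply Rmult_le_compat_l; [lra|].
      apply exp_le.
      assert (ln (s + 1) <= ln 2 + ln s).
      { rewrite <- ln_mult by lra. apply ln_le; lra. }
      assert (Rpower (s + 1) a <= e2 * Ps).
      { unfold Ps, e2, Rpower. rewrite <- exp_plus. apply exp_le. nra. }
      nra. }
    apply Rle_trans with (2 := H1).
    assert (H2 : ln (h s) <= ln C + - b * Ps).
    { rewrite <- ln_mul_exp by auto. apply ln_le; auto. }
    assert (H3 : exp (e2 * ln (h s)) <= exp (e2 * (ln C + - b * Ps))).
    { apply exp_le. apply Rmult_le_compat_l; lra. }
    assert (E : c * exp (- e2 * ln C) * exp (e2 * (ln C + - b * Ps))
               = c * exp (- b * (e2 * Ps))).
    { rewrite !Rmult_assoc. rewrite <- !exp_plus. f_equal. f_equal. ring. }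
    rewrite <- E.
    apply Rmult_le_compat_l; auto.
    pose proof (exp_pos (- e2 * ln C)).
    left. apply Rmult_lt_0_compat; auto.
  -
    assert (H1 : T s <= s * C * exp (- b * Ps) / (1 - r)).
    { apply (tail_geom T h R1 s); auto.
      - left; apply Rmult_lt_0_compat; [nra|]; apply exp_pos.
      - intros k.
        pose proof (INR_le_pow2 k) as Hk2. pose proof (pos_INR k).
        assert (Hk1 : 1 <= 2 ^ k) by lra.
        set (u := 2 ^ k * s).
        assert (Hu : s <= u) by (unfold u; nra).
        destruct (Hh u ltac:(lra)) as [HU _].
        apply Rle_trans with (u * (C * exp (- b * Rpower u a))).
        { apply Rmult_le_compat_l; lra. }
        assert (Elu : ln u = INR k * ln 2 + ln s).
        { unfold u. rewrite ln_mult, pow2_exp, ln_exp; lra. }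
        assert (HPu : 2 ^ k * Ps <= Rpower u a).
        { unfold Ps, Rpower. rewrite Elu. rewrite pow2_exp, <- exp_plus.
          apply exp_le. assert (0 <= INR k * ln 2) by nra. nra. }
        assert (HPu2 : b * Ps + INR k * (2 * ln 2) <= b * Rpower u a).
        { assert (b * (Ps * (INR k + 1)) <= b * (2 ^ k * Ps)).
          { apply Rmult_le_compat_l; [lra|]. nra. }
          assert (b * R1 <= b * Ps) by nra. nra. }
        apply Rle_trans with (u * (C * exp (- b * Ps - INR k * (2 * ln 2)))).
        { apply Rmult_le_compat_l; [lra|]. apply Rmult_le_compat_l; [lra|]. apply exp_le. lra. }
        right.
        unfold r. rewrite <- exp_INR_mul.
        unfold u. rewrite pow2_exp.
        replace (exp (INR k * ln 2) * s * (C * exp (- b * Ps - INR k * (2 * ln 2))))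
          with (s * C * (exp (INR k * ln 2) * exp (- b * Ps - INR k * (2 * ln 2)))) by ring.
        replace (s * C * exp (- b * Ps) * exp (INR k * - ln 2))
          with (s * C * (exp (- b * Ps) * exp (INR k * - ln 2))) by ring.
        f_equal. rewrite <- !exp_plus. f_equal. ring. }
    apply Rle_trans with (1 := H1).
    assert (H2 : ln c + - b * Ps <= ln (h s)).
    { rewrite <- ln_mul_exp by auto. apply ln_le; auto.
      apply Rmult_lt_0_compat; auto; apply exp_pos. }
    assert (H3 : exp (1/2 * (ln c + - b * Ps)) <= exp (1/2 * ln (h s))).
    { apply exp_le. apply Rmult_le_compat_l; lra. }
    assert (E : K * (2 / b) * exp (- (1/2) * ln c) * exp (1/2 * (ln c + - b * Ps))
               = K * (2 / b) * exp (- (b * Ps) / 2)).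
    { rewrite Rmult_assoc. f_equal. rewrite <- exp_plus. f_equal. field. }
    apply Rle_trans with (K * (2 / b) * exp (- (b * Ps) / 2)).
    +
      set (q := exp (- (b * Ps) / 2)).
      assert (Eq : exp (- b * Ps) = q * q).
      { unfold q. rewrite <- exp_plus. f_equal. field. }
      assert (Hq : 0 < q) by apply exp_pos.
      assert (Hsq : s * q <= 2 / b).
      { assert (Hex : 1 + (b * Ps) / 2 <= exp ((b * Ps) / 2)) by apply exp_ineq1_le.
        assert (Eq2 : exp ((b * Ps) / 2) * q = 1).
        { unfold q. rewrite <- exp_plus. replace (b * Ps / 2 + - (b * Ps) / 2) with 0 by field.
          apply exp_0. }
        assert (s * b / 2 <= exp ((b * Ps) / 2)) by nra.
        assert (s * b / 2 * q <= 1) by nra.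
        replace (2 / b) with ((2 / b) * 1) by ring.
        replace (s * q) with ((2 / b) * (s * b / 2 * q)) by (field; lra).
        apply Rmult_le_compat_l; [left; apply Rdiv_lt_0_compat; lra | lra]. }
      rewrite Eq. unfold K.
      replace (s * C * (q * q) / (1 - r)) with ((C / (1 - r)) * q * (s * q)) by (field; lra).
      replace (C / (1 - r) * (2 / b) * q) with ((C / (1 - r)) * q * (2 / b)) by ring.
      apply Rmult_le_compat_l; auto. left. apply Rmult_lt_0_compat; auto.
    + rewrite <- E. apply Rmult_le_compat_l; auto.
      left. apply Rmult_lt_0_compat; [|apply exp_pos].
      apply Rmult_lt_0_compat; auto. apply Rdiv_lt_0_compat; lra.
Qed.

Lemma glue (F f : R -> R) c0 c1 al0 al1 R1 :
  0 < c0 -> 0 < c1 -> 0 < al0 -> 0 < al1 ->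
  full_support F -> (forall x, 0 <= F x) -> (forall x, F x <= 1) ->
  (forall s, R1 <= s -> c0 * rpow (f (- s)) al0 <= F (- s) /\ F (- s) <= c1 * rpow (f (- s)) al1) ->
  (forall s, R1 <= s -> c0 * rpow (f s) al0 <= 1 - F s /\ 1 - F s <= c1 * rpow (f s) al1) ->
  regular_tail F f.
Proof.
  intros H0 H1 H2 H3 Hs HF0 HF1 HL HR.
  assert (A1 : 0 < F (- R1)).
  { pose proof (Hs (- R1 - 1) (- R1) ltac:(lra)). pose proof (HF0 (- R1 - 1)). lra. }
  assert (A2 : 0 < 1 - F R1).
  { pose proof (Hs R1 (R1 + 1) ltac:(lra)). pose proof (HF1 (R1 + 1)). lra. }
  set (g := Rmin (1/2) (Rmin (F (- R1)) (1 - F R1)) / 2).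
  assert (Hg1 : g <= 1/2 / 2).
  { unfold g. pose proof (Rmin_l (1/2) (Rmin (F (- R1)) (1 - F R1))). lra. }
  assert (Hg2 : g < F (- R1) /\ g < 1 - F R1).
  { unfold g. pose proof (Rmin_r (1/2) (Rmin (F (- R1)) (1 - F R1))).
    pose proof (Rmin_l (F (- R1)) (1 - F R1)). pose proof (Rmin_r (F (- R1)) (1 - F R1)).
    pose proof (Rmin_l (1/2) (Rmin (F (- R1)) (1 - F R1))).
    assert (0 < Rmin (1/2) (Rmin (F (- R1)) (1 - F R1))).
    { apply Rmin_glb_lt; [lra|]. apply Rmin_glb_lt; lra. }
    lra. }
  assert (Hg0 : 0 < g).
  { unfold g. assert (0 < Rmin (1/2) (Rmin (F (- R1)) (1 - F R1))).
    { apply Rmin_glb_lt; [lra|]. apply Rmin_glb_lt; lra. } lra. }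
  exists g, c0, c1, al0, al1.
  split; [lra|]. do 4 (split; [auto|]).
  intros x Hx. unfold Rmin in Hx |- *.
  destruct (Rle_dec (F x) (1 - F x)) as [Hle|Hle].
  - assert (x < - R1).
    { destruct (Rlt_or_le x (- R1)) as [h|h]; auto.
      destruct h as [h|h]. pose proof (Hs _ _ h). lra. subst. lra. }
    destruct (HL (- x) ltac:(lra)) as [HA HB]. rewrite Ropp_involutive in HA, HB. auto.
  - assert (R1 < x).
    { destruct (Rlt_or_le R1 x) as [h|h]; auto.
      destruct h as [h|h]. pose proof (Hs _ _ h). lra. subst. lra. }
    apply HR. lra.
Qed.

Theorem mainTheorem2 (F f : R -> R)
  (Hcdf : is_cdf_with_density F f)
  (Hsupp : full_support F)
  (Hbdd : bounded_fun f)
  (Hunim : unimodal f) :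
  ((exists a b, 1 < a /\ a <= b /\
      bigO_inf f (fun x => Rpower (Rabs x) (- a)) /\
      bigOmega_inf f (fun x => Rpower (Rabs x) (- b)))
   \/
   (exists a b, 1 <= a /\ 0 < b /\
      bigO_inf f (fun x => exp (- b * Rpower (Rabs x) a)) /\
      bigOmega_inf f (fun x => exp (- b * Rpower (Rabs x) a))))
  -> regular_tail F f.
Proof.
  destruct Hcdf as (Hf0 & Hint & Hlim0 & Hlim1).
  destruct Hunim as (m & Hinc & Hdecr).
  assert (HF0 : forall x, 0 <= F x).
  { intros x. destruct (Rle_or_lt 0 (F x)) as [h|h]; auto. exfalso.
    destruct (Hlim0 (- F x) ltac:(lra)) as [N HN].
    set (y := Rmin N (x - 1)).
    assert (F y < F x) by (apply Hsupp; unfold y; pose proof (Rmin_r N (x - 1)); lra).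
    specialize (HN y (Rmin_l _ _)). apply Rabs_def2 in HN. lra. }
  assert (HF1 : forall x, F x <= 1).
  { intros x. destruct (Rle_or_lt (F x) 1) as [h|h]; auto. exfalso.
    destruct (Hlim1 (F x - 1) ltac:(lra)) as [N HN].
    set (y := Rmax N (x + 1)).
    assert (F x < F y) by (apply Hsupp; unfold y; pose proof (Rmax_r N (x + 1)); lra).
    specialize (HN y (Rmax_l _ _)). apply Rabs_def2 in HN. lra. }
  assert (Ldec : forall u v, - m <= u <= v -> F (- u) - F (- v) <= (v - u) * f (- u)).
  { intros u v Huv. destruct (Hint (- v) (- u) ltac:(lra)) as [pr E]. rewrite E.
    replace ((v - u) * f (- u)) with (f (- u) * (- u - - v)) by ring.
    apply int_upper; [lra|]. intros t Ht. apply Hinc; lra. }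
  assert (Llow : forall u, - m <= u -> f (- (u + 1)) <= F (- u)).
  { intros u Hu. destruct (Hint (- (u + 1)) (- u) ltac:(lra)) as [pr E].
    assert (f (- (u + 1)) * (- u - - (u + 1)) <= RiemannInt pr).
    { apply int_lower; [lra|]. intros t Ht. apply Hinc; lra. }
    pose proof (HF0 (- (u + 1))). lra. }
  assert (Llim : forall eps, 0 < eps -> exists N, forall t, N <= t -> F (- t) < eps).
  { intros eps He. destruct (Hlim0 eps He) as [N HN]. exists (- N). intros t Ht.
    specialize (HN (- t) ltac:(lra)). apply Rabs_def2 in HN. lra. }
  assert (Rdec : forall u v, m <= u <= v -> (1 - F u) - (1 - F v) <= (v - u) * f u).
  { intros u v Huv. destruct (Hint u v ltac:(lra)) as [pr E].
    replace ((1 - F u) - (1 - F v)) with (F v - F u) by ring. rewrite E, Rmult_comm.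
    apply int_upper; [lra|]. intros t Ht. apply Hdecr; lra. }
  assert (Rlow : forall u, m <= u -> f (u + 1) <= 1 - F u).
  { intros u Hu. destruct (Hint u (u + 1) ltac:(lra)) as [pr E].
    assert (f (u + 1) * (u + 1 - u) <= RiemannInt pr).
    { apply int_lower; [lra|]. intros t Ht. apply Hdecr; lra. }
    pose proof (HF1 (u + 1)). lra. }
  assert (Rlim : forall eps, 0 < eps -> exists N, forall t, N <= t -> 1 - F t < eps).
  { intros eps He. destruct (Hlim1 eps He) as [N HN]. exists N. intros t Ht.
    specialize (HN t Ht). apply Rabs_def2 in HN. lra. }
  assert (Habs : forall u, 0 <= u -> Rabs (- u) = u /\ Rabs u = u).
  { intros u Hu. rewrite Rabs_Ropp, Rabs_pos_eq; auto. }
  assert (Hm : - m <= Rabs m /\ m <= Rabs m).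
  { split; [apply Rle_trans with (Rabs (- m)); [apply RRle_abs| rewrite Rabs_Ropp; lra] | apply RRle_abs]. }
  intros [(a & b & Ha & Hab & (C & R0 & HC & HO) & (c & R0' & Hc & HOm))
         | (a & b & Ha & Hb & (C & R0 & HC & HO) & (c & R0' & Hc & HOm))].
  - destruct (side_i a b C c Ha Hab HC Hc) as (c0 & c1 & al0 & al1 & H0 & H1 & H2 & H3 & HS).
    set (R1 := Rmax 1 (Rmax R0 (Rmax R0' (Rabs m)))).
    assert (HR1 : 1 <= R1 /\ R0 <= R1 /\ R0' <= R1 /\ Rabs m <= R1).
    { unfold R1. pose proof (Rmax_l 1 (Rmax R0 (Rmax R0' (Rabs m)))).
      pose proof (Rmax_r 1 (Rmax R0 (Rmax R0' (Rabs m)))).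
      pose proof (Rmax_l R0 (Rmax R0' (Rabs m))). pose proof (Rmax_r R0 (Rmax R0' (Rabs m))).
      pose proof (Rmax_l R0' (Rabs m)). pose proof (Rmax_r R0' (Rabs m)). lra. }
    apply (glue F f c0 c1 al0 al1 R1); auto.
    + apply (HS (fun s => F (- s)) (fun u => f (- u)) R1); try lra.
      * intros u Hu. destruct (Habs u ltac:(lra)) as [E _].
        specialize (HO (- u)). specialize (HOm (- u)). rewrite E in HO, HOm.
        split; [apply HO | apply HOm]; lra.
      * intros u v Huv. apply Ldec. lra.
      * exact Llim.
      * intros u Hu. apply Llow. lra.
    + apply (HS (fun s => 1 - F s) f R1); try lra.
      * intros u Hu. destruct (Habs u ltac:(lra)) as [_ E].
        specialize (HO u). specialize (HOm u). rewrite E in HO, HOm.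
        split; [apply HO | apply HOm]; lra.
      * intros u v Huv. apply Rdec. lra.
      * exact Rlim.
      * intros u Hu. apply Rlow. lra.
  - destruct (side_ii a b C c Ha Hb HC Hc) as (c0 & c1 & al0 & al1 & H0 & H1 & H2 & H3 & HS).
    set (R1 := Rmax (2 * ln 2 / b) (Rmax 1 (Rmax R0 (Rmax R0' (Rabs m))))).
    assert (HR1 : 1 <= R1 /\ R0 <= R1 /\ R0' <= R1 /\ Rabs m <= R1 /\ 2 * ln 2 / b <= R1).
    { unfold R1. pose proof (Rmax_l (2 * ln 2 / b) (Rmax 1 (Rmax R0 (Rmax R0' (Rabs m))))).
      pose proof (Rmax_r (2 * ln 2 / b) (Rmax 1 (Rmax R0 (Rmax R0' (Rabs m))))).
      pose proof (Rmax_l 1 (Rmax R0 (Rmax R0' (Rabs m)))).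
      pose proof (Rmax_r 1 (Rmax R0 (Rmax R0' (Rabs m)))).
      pose proof (Rmax_l R0 (Rmax R0' (Rabs m))). pose proof (Rmax_r R0 (Rmax R0' (Rabs m))).
      pose proof (Rmax_l R0' (Rabs m)). pose proof (Rmax_r R0' (Rabs m)). lra. }
    assert (HbR : 2 * ln 2 <= b * R1).
    { destruct HR1 as (_ & _ & _ & _ & h).
      replace (2 * ln 2) with (b * (2 * ln 2 / b)) by (field; lra).
      apply Rmult_le_compat_l; lra. }
    apply (glue F f c0 c1 al0 al1 R1); auto.
    + apply (HS (fun s => F (- s)) (fun u => f (- u)) R1); try lra.
      * intros u Hu. destruct (Habs u ltac:(lra)) as [E _].
        specialize (HO (- u)). specialize (HOm (- u)). rewrite E in HO, HOm.
        split; [apply HO | apply HOm]; lra.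
      * intros u v Huv. apply Ldec. lra.
      * exact Llim.
      * intros u Hu. apply Llow. lra.
    + apply (HS (fun s => 1 - F s) f R1); try lra.
      * intros u Hu. destruct (Habs u ltac:(lra)) as [_ E].
        specialize (HO u). specialize (HOm u). rewrite E in HO, HOm.
        split; [apply HO | apply HOm]; lra.
      * intros u v Huv. apply Rdec. lra.
      * exact Rlim.
      * intros u Hu. apply Rlow. lra.
Qed.
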